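(* Let $r,m\ge1$, $W\in\mathbb{R}^{m\times r}$, $b\in\mathbb{R}^m$, $\sigma^2>0$, and $h(z)=a(Wz+b)$ where $a(x)=\log(1+e^x)$ is applied componentwise. Suppose $Z\sim N(0,I_r)$ and $X\mid\{Z=z\}\sim N(h(z),\sigma^2I_m)$. Fix $x\in\mathbb{R}^m$, let $p(z\mid x)$ be the conditional density of $Z$ given $X=x$, and set $V(z)=-\log p(z\mid x)$. Then $V$ is bounded below, $V$ satisfies conditions (b) and (c) of Assumption A1, and for every $\gamma>0$ there exist $\alpha>0$ and $\beta\in(0,1)$ such that Assumption A2 holds for $V$ (equivalently, $V-\inf V$ satisfies Assumptions A1 and A2).
   Context: A map $\phi:\mathbb{R}^a\to\mathbb{R}^b$ has polynomial growth if there are $C>0$ and an integer $m\ge0$ with $\Vert\phi(x)\Vert\le C(1+\Vert x\Vert^m)$ for all $x$; $\mathscr{C}^\infty_{poly}$ denotes the infinitely differentiable maps such that the map and all its derivatives have polynomial growth. Norms of matrices are operator norms. Assumption A1: (a) $V(x)\ge0$ for all $x\in\mathbb{R}^r$; (b) $\Vert\nabla^2V(x)\Vert\le\nu$ for some constant $\nu>0$ and all $x$; (c) $V\in\mathscr{C}^\infty_{poly}$. Assumption A2 (for a given $\gamma>0$): there exist constants $\alpha>0$ and $0<\beta<1$ such that for all $x\in\mathbb{R}^r$, $\frac12\langle\nabla V(x),x\rangle\ge\beta V(x)+\gamma^2C_\beta\Vert x\Vert^2-\alpha$, where $C_\beta=\frac{\beta(2-\beta)}{8(1-\beta)}$. 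*)

(* Defs.v *)
From Stdlib Require Import Reals List.
Open Scope R_scope.

(* Vectors of R^k are represented as functions nat -> R; only the
   coordinates 0..k-1 are ever used. *)
Definition vec := nat -> R.

Fixpoint vsum (k : nat) (f : nat -> R) : R :=
  match k with
  | O => 0
  | S k' => vsum k' f + f k'
  end.

Definition vnorm (k : nat) (v : vec) : R := sqrt (vsum k (fun j => v j ^ 2)).

Definition upd (z : vec) (i : nat) (t : R) : vec :=
  fun j => if Nat.eq_dec j i then t else z j.

Definition is_partial (f : vec -> R) (i : nat) (g : vec -> R) : Prop :=
  forall z, derivable_pt_lim (fun t => f (upd z i t)) (z i) (g z).

Definition poly_growth (k : nat) (f : vec -> R) : Prop :=
  exists (C : R) (n : nat), 0 < C /\
    forall z, Rabs (f z) <= C * (1 + vnorm k z ^ n).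

(* C^infty_poly on R^k: all iterated partial derivatives exist
   (D (i :: l) = partial_i (D l)) and all of them have polynomial growth. *)
Definition C_inf_poly (k : nat) (f : vec -> R) : Prop :=
  exists D : list nat -> vec -> R,
    D nil = f /\
    (forall l i, (i < k)%nat -> is_partial (D l) i (D (i :: l))) /\
    (forall l, poly_growth k (D l)).

Definition A1a (k : nat) (V : vec -> R) : Prop := forall z, 0 <= V z.

(* Assumption A1 (b): operator norm of the Hessian bounded by nu > 0.
   G i = partial_i V,  H i j = partial_j partial_i V. *)
Definition A1b (k : nat) (V : vec -> R) : Prop :=
  exists (nu : R) (G : nat -> vec -> R) (H : nat -> nat -> vec -> R),
    0 < nu /\
    (forall i, (i < k)%nat -> is_partial V i (G i)) /\
    (forall i j, (i < k)%nat -> (j < k)%nat -> is_partial (G i) j (H i j)) /\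
    (forall z v, vnorm k (fun i => vsum k (fun j => H i j z * v j))
                 <= nu * vnorm k v).

Definition A1c (k : nat) (V : vec -> R) : Prop := C_inf_poly k V.

Definition C_beta (beta : R) : R := beta * (2 - beta) / (8 * (1 - beta)).

Definition A2 (k : nat) (gamma : R) (V : vec -> R) : Prop :=
  exists (alpha beta : R) (G : nat -> vec -> R),
    0 < alpha /\ 0 < beta < 1 /\
    (forall i, (i < k)%nat -> is_partial V i (G i)) /\
    (forall z, / 2 * vsum k (fun i => G i z * z i)
               >= beta * V z + gamma ^ 2 * C_beta beta * vnorm k z ^ 2 - alpha).

Definition softplus (t : R) : R := ln (1 + exp t).

Definition hmap (r : nat) (W : nat -> nat -> R) (b : vec) (z : vec) : vec :=
  fun i => softplus (vsum r (fun j => W i j * z j) + b i).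

Definition gauss_density (k : nat) (mu : vec) (s : R) (y : vec) : R :=
  Rpower (2 * PI * s) (- INR k / 2) *
  exp (- (vnorm k (fun i => y i - mu i)) ^ 2 / (2 * s)).

(* conditional density of Z given X = x (Bayes' formula), where px is the
   marginal density p(x) of X at x:
   p(z | x) = p(x | z) phi(z) / p(x). *)
Definition posterior (r m : nat) (W : nat -> nat -> R) (b : vec) (sigma2 : R)
  (px : R) (x : vec) (z : vec) : R :=
  gauss_density m (hmap r W b z) sigma2 x * gauss_density r (fun _ => 0) 1 z / px.

Definition Vpot (r m : nat) (W : nat -> nat -> R) (b : vec) (sigma2 : R)
  (px : R) (x : vec) (z : vec) : R :=
  - ln (posterior r m W b sigma2 px x z).

(* Main.v *)
Require Import Defs.
From Stdlib Require Import Reals Lra Lia Psatz FunctionalExtensionality.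
Open Scope R_scope.


Lemma dpl_eq (f g : R -> R) x l l' :
  (forall t, f t = g t) -> l = l' -> derivable_pt_lim g x l' -> derivable_pt_lim f x l.
Proof.
  intros Hfg Hl H eps Heps. destruct (H eps Heps) as [d Hd]. exists d.
  intros h Hh Hh'. rewrite !Hfg, Hl. now apply Hd.
Qed.

Lemma dpl' (f g : R -> R) x l l' :
  derivable_pt_lim g x l' -> (forall t, f t = g t) -> l = l' -> derivable_pt_lim f x l.
Proof. intros; eapply dpl_eq; eauto. Qed.

Definition sigm (t : R) := exp t / (1 + exp t).

Lemma sp_deriv t : derivable_pt_lim softplus t (sigm t).
Proof.
  unfold softplus, sigm.
  assert (H1 : 0 < 1 + exp t) by (pose proof (exp_pos t); lra).
  apply (dpl_eq _ (comp ln (fun u => 1 + exp u)) _ _ (/ (1 + exp t) * exp t)).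
  - reflexivity.
  - field; lra.
  - apply derivable_pt_lim_comp.
    + apply (dpl_eq _ (plus_fct (fun _ => 1) exp) _ _ (0 + exp t)); [reflexivity|ring|].
      apply derivable_pt_lim_plus; [apply derivable_pt_lim_const|apply derivable_pt_lim_exp].
    + now apply derivable_pt_lim_ln.
Qed.

Lemma sg_deriv t : derivable_pt_lim sigm t (sigm t * (1 + -1 * sigm t)).
Proof.
  unfold sigm.
  assert (H1 : 0 < 1 + exp t) by (pose proof (exp_pos t); lra).
  eapply (dpl' _ (div_fct exp (fun u => 1 + exp u))).
  - apply derivable_pt_lim_div.
    + apply derivable_pt_lim_exp.
    + eapply (dpl' _ (plus_fct (fun _ => 1) exp)); [|reflexivity|reflexivity].
      apply derivable_pt_lim_plus; [apply derivable_pt_lim_const|apply derivable_pt_lim_exp].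
    + unfold div_fct; simpl; lra.
  - reflexivity.
  - unfold Rsqr. field; lra.
Qed.

Lemma vsum_ext n f g : (forall j, (j < n)%nat -> f j = g j) -> vsum n f = vsum n g.
Proof.
  induction n; simpl; intros H; auto.
  rewrite IHn by (intros; apply H; lia). rewrite H by lia. reflexivity.
Qed.

Lemma vsum_lin_deriv (W : nat -> R) n z i t0 :
  derivable_pt_lim (fun t => vsum n (fun j => W j * upd z i t j)) t0
    (vsum n (fun j => W j * (if Nat.eq_dec j i then 1 else 0))).
Proof.
  induction n; simpl.
  - apply derivable_pt_lim_const.
  - destruct (Nat.eq_dec n i).
    + eapply (dpl' _ (plus_fct (fun t => vsum n (fun j => W j * upd z i t j))
                              (mult_fct (fun _ => W n) id))).
      { apply derivable_pt_lim_plus; [exact IHn|].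
        apply derivable_pt_lim_mult; [apply derivable_pt_lim_const|apply derivable_pt_lim_id]. }
      { intro t. unfold plus_fct, mult_fct, upd, id. destruct (Nat.eq_dec n i); [reflexivity|congruence]. }
      { cbv beta; unfold id; ring. }
    + eapply (dpl' _ (plus_fct (fun t => vsum n (fun j => W j * upd z i t j))
                              (fun _ => W n * z n))).
      { apply derivable_pt_lim_plus; [exact IHn|apply derivable_pt_lim_const]. }
      { intro t. unfold plus_fct, upd. destruct (Nat.eq_dec n i); [congruence|reflexivity]. }
      { ring. }
Qed.

Inductive expr :=
| EC (c : R) | EV (j : nat) | EA (e1 e2 : expr) | EM (e1 e2 : expr)
| ESp (k : nat) | ESg (k : nat).

Section Ex.
Variable r : nat.
Variable W : nat -> nat -> R.
Variable b : vec.

Definition lin k (z : vec) := vsum r (fun j => W k j * z j) + b k.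
Definition coef k i := vsum r (fun j => W k j * (if Nat.eq_dec j i then 1 else 0)).

Fixpoint ev (e : expr) (z : vec) : R :=
  match e with
  | EC c => c
  | EV j => if Compare_dec.lt_dec j r then z j else 0
  | EA a c => ev a z + ev c z
  | EM a c => ev a z * ev c z
  | ESp k => softplus (lin k z)
  | ESg k => sigm (lin k z)
  end.

Fixpoint dv (i : nat) (e : expr) : expr :=
  match e with
  | EC _ => EC 0
  | EV j => EC (if Compare_dec.lt_dec j r then (if Nat.eq_dec j i then 1 else 0) else 0)
  | EA a c => EA (dv i a) (dv i c)
  | EM a c => EA (EM (dv i a) c) (EM a (dv i c))
  | ESp k => EM (ESg k) (EC (coef k i))
  | ESg k => EM (EM (ESg k) (EA (EC 1) (EM (EC (-1)) (ESg k)))) (EC (coef k i))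
  end.

Lemma lin_deriv k z i t0 :
  derivable_pt_lim (fun t => lin k (upd z i t)) t0 (coef k i).
Proof.
  unfold lin, coef.
  eapply (dpl' _ (plus_fct (fun t => vsum r (fun j => W k j * upd z i t j)) (fun _ => b k))).
  { apply derivable_pt_lim_plus; [apply vsum_lin_deriv|apply derivable_pt_lim_const]. }
  { reflexivity. }
  { ring. }
Qed.

Lemma dv_ok i e z t0 :
  derivable_pt_lim (fun t => ev e (upd z i t)) t0 (ev (dv i e) (upd z i t0)).
Proof.
  induction e; simpl.
  - apply derivable_pt_lim_const.
  - destruct (Compare_dec.lt_dec j r).
    + unfold upd. destruct (Nat.eq_dec j i).
      * apply derivable_pt_lim_id.
      * apply derivable_pt_lim_const.
    + apply derivable_pt_lim_const.
  - eapply (dpl' _ (plus_fct (fun t => ev e1 (upd z i t)) (fun t => ev e2 (upd z i t))));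
      [apply derivable_pt_lim_plus; [exact IHe1|exact IHe2]|reflexivity|reflexivity].
  - eapply (dpl' _ (mult_fct (fun t => ev e1 (upd z i t)) (fun t => ev e2 (upd z i t))));
      [apply derivable_pt_lim_mult; [exact IHe1|exact IHe2]|reflexivity|reflexivity].
  - eapply (dpl' _ (comp softplus (fun t => lin k (upd z i t))));
      [apply derivable_pt_lim_comp; [apply lin_deriv|apply sp_deriv]|reflexivity|reflexivity].
  - eapply (dpl' _ (comp sigm (fun t => lin k (upd z i t))));
      [apply derivable_pt_lim_comp; [apply lin_deriv|apply sg_deriv]|reflexivity|reflexivity].
Qed.

Lemma upd_same (z : vec) i : upd z i (z i) = z.
Proof.
  apply functional_extensionality; intro j. unfold upd.
  destruct (Nat.eq_dec j i); subst; reflexivity.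
Qed.

Lemma dv_partial i e : is_partial (ev e) i (ev (dv i e)).
Proof.
  intro z. pose proof (dv_ok i e z (z i)) as H. rewrite upd_same in H. exact H.
Qed.

End Ex.


Lemma vsum_nonneg n f : (forall j, (j < n)%nat -> 0 <= f j) -> 0 <= vsum n f.
Proof. induction n; simpl; intros H; [lra|]. pose proof (H n ltac:(lia)). pose proof (IHn ltac:(intros; apply H; lia)). lra. Qed.

Lemma vsum_le n f g : (forall j, (j < n)%nat -> f j <= g j) -> vsum n f <= vsum n g.
Proof. induction n; simpl; intros H; [lra|]. pose proof (H n ltac:(lia)). pose proof (IHn ltac:(intros; apply H; lia)). lra. Qed.

Lemma vsum_term n f j : (forall j, (j < n)%nat -> 0 <= f j) -> (j < n)%nat -> f j <= vsum n f.
Proof.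
  induction n; simpl; intros H Hj; [lia|].
  destruct (Nat.eq_dec j n).
  - subst. pose proof (vsum_nonneg n f ltac:(intros; apply H; lia)). lra.
  - pose proof (IHn ltac:(intros; apply H; lia) ltac:(lia)). pose proof (H n ltac:(lia)). lra.
Qed.

Lemma vsum_abs n f : Rabs (vsum n f) <= vsum n (fun j => Rabs (f j)).
Proof. induction n; simpl. rewrite Rabs_R0; lra. eapply Rle_trans; [apply Rabs_triang|]. lra. Qed.

Lemma vsum_scal n f c : vsum n (fun j => f j * c) = vsum n f * c.
Proof. induction n; simpl; [ring|rewrite IHn; ring]. Qed.

Lemma vsum_plus n f g : vsum n (fun j => f j + g j) = vsum n f + vsum n g.
Proof. induction n; simpl; [ring|rewrite IHn; ring]. Qed.

Lemma vnorm_nonneg k z : 0 <= vnorm k z.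
Proof. apply sqrt_pos. Qed.

Lemma coord_le k z j : (j < k)%nat -> Rabs (z j) <= vnorm k z.
Proof.
  intros Hj. unfold vnorm. rewrite <- sqrt_Rsqr_abs. apply sqrt_le_1_alt.
  unfold Rsqr. replace (z j * z j) with ((fun j => z j ^ 2) j) by (simpl; ring).
  apply (vsum_term k (fun j => z j ^ 2) j); auto. intros; apply pow2_ge_0.
Qed.

Lemma vnorm_sq k z : vnorm k z ^ 2 = vsum k (fun j => z j ^ 2).
Proof.
  unfold vnorm. rewrite <- Rsqr_pow2. apply Rsqr_sqrt. apply vsum_nonneg. intros; apply pow2_ge_0.
Qed.

Lemma exp_le_mono a c : a <= c -> exp a <= exp c.
Proof. intros [H|H]; [left; now apply exp_increasing|subst; lra]. Qed.

Lemma ln_le_of a c : 0 < a -> a <= exp c -> ln a <= c.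
Proof.
  intros Ha H. destruct (Rle_or_lt (ln a) c) as [h|h]; auto.
  apply exp_increasing in h. rewrite exp_ln in h by lra. lra.
Qed.

Lemma sp_pos u : 0 < softplus u.
Proof.
  unfold softplus. rewrite <- ln_1. apply ln_increasing; [lra|]. pose proof (exp_pos u); lra.
Qed.

Lemma sp_le u : softplus u <= Rabs u + 1.
Proof.
  unfold softplus. pose proof (exp_pos u). apply ln_le_of; [lra|].
  rewrite exp_plus. pose proof (exp_ineq1_le 1).
  assert (exp u <= exp (Rabs u)) by (apply exp_le_mono; apply Rle_abs).
  assert (1 <= exp (Rabs u)) by (pose proof (exp_ineq1_le (Rabs u)); pose proof (Rabs_pos u); lra).
  nra.
Qed.

Lemma sp_ge u : u <= softplus u.
Proof.
  unfold softplus. rewrite <- (ln_exp u) at 1.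
  destruct (Req_dec u u); [|lra].
  pose proof (exp_pos u).
  destruct (Rle_lt_or_eq_dec (exp u) (1 + exp u)) as [h|h]; [lra| |lra].
  left. apply ln_increasing; lra.
Qed.

Lemma sg_bounds u : 0 < sigm u < 1.
Proof.
  unfold sigm. pose proof (exp_pos u). split.
  - apply Rdiv_lt_0_compat; lra.
  - apply Rmult_lt_reg_r with (1 + exp u); [lra|]. unfold Rdiv. rewrite Rmult_assoc, Rinv_l by lra. lra.
Qed.

Lemma pow_bound y n : 0 <= y -> (1 + y) ^ n <= 2 ^ n * (1 + y ^ n).
Proof.
  intros Hy. pose proof (pow_le y n Hy). destruct (Rle_or_lt y 1).
  - assert ((1 + y) ^ n <= 2 ^ n) by (apply pow_incr; lra).
    pose proof (pow_le 2 n ltac:(lra)). nra.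
  - assert ((1 + y) ^ n <= (2 * y) ^ n) by (apply pow_incr; lra).
    rewrite Rpow_mult_distr in H1. pose proof (pow_le 2 n ltac:(lra)). nra.
Qed.

Section G.
Variable r : nat.
Variable W : nat -> nat -> R.
Variable b : vec.

Definition pg (f : vec -> R) := exists C n, 0 < C /\ forall z, Rabs (f z) <= C * (1 + vnorm r z) ^ n.

Lemma pg_poly f : pg f -> poly_growth r f.
Proof.
  intros (C & n & HC & H). exists (C * 2 ^ n), n. split.
  - apply Rmult_lt_0_compat; auto. apply pow_lt; lra.
  - intros z. pose proof (pow_bound (vnorm r z) n (vnorm_nonneg r z)). specialize (H z).
    eapply Rle_trans; [exact H|]. rewrite Rmult_assoc. apply Rmult_le_compat_l; lra.
Qed.

Lemma one_le_pow z n : 1 <= (1 + vnorm r z) ^ n.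
Proof. pose proof (vnorm_nonneg r z). pose proof (pow_incr 1 (1 + vnorm r z) n) as P. rewrite pow1 in P. apply P. lra. Qed.

Lemma pg_add f g : pg f -> pg g -> pg (fun z => f z + g z).
Proof.
  intros (C1 & n1 & H1 & F) (C2 & n2 & H2 & G). exists (C1 + C2), (n1 + n2)%nat. split; [lra|].
  intros z. pose proof (vnorm_nonneg r z).
  assert (A1 : (1 + vnorm r z) ^ n1 <= (1 + vnorm r z) ^ (n1 + n2)) by (apply Rle_pow; [lra|lia]).
  assert (A2 : (1 + vnorm r z) ^ n2 <= (1 + vnorm r z) ^ (n1 + n2)) by (apply Rle_pow; [lra|lia]).
  specialize (F z). specialize (G z).
  eapply Rle_trans; [apply Rabs_triang|]. nra.
Qed.

Lemma pg_mul f g : pg f -> pg g -> pg (fun z => f z * g z).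
Proof.
  intros (C1 & n1 & H1 & F) (C2 & n2 & H2 & G). exists (C1 * C2), (n1 + n2)%nat. split; [nra|].
  intros z. rewrite Rabs_mult, pow_add. specialize (F z). specialize (G z).
  pose proof (Rabs_pos (f z)). pose proof (Rabs_pos (g z)).
  replace (C1 * C2 * ((1 + vnorm r z) ^ n1 * (1 + vnorm r z) ^ n2)) with
    ((C1 * (1 + vnorm r z) ^ n1) * (C2 * (1 + vnorm r z) ^ n2)) by ring.
  apply Rmult_le_compat; auto.
Qed.

Lemma pg_const c : pg (fun _ => c).
Proof. exists (Rabs c + 1), 0%nat. split; [pose proof (Rabs_pos c); lra|]. intros; simpl; lra. Qed.

Lemma lin_bound k z : Rabs (lin r W b k z) <=
  (vsum r (fun j => Rabs (W k j)) + Rabs (b k)) * (1 + vnorm r z).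
Proof.
  unfold lin. pose proof (vnorm_nonneg r z).
  eapply Rle_trans; [apply Rabs_triang|].
  assert (Rabs (vsum r (fun j => W k j * z j)) <= vsum r (fun j => Rabs (W k j)) * vnorm r z).
  { eapply Rle_trans; [apply vsum_abs|]. rewrite <- vsum_scal. apply vsum_le.
    intros j Hj. rewrite Rabs_mult. apply Rmult_le_compat_l; [apply Rabs_pos|]. now apply coord_le. }
  assert (0 <= vsum r (fun j => Rabs (W k j))) by (apply vsum_nonneg; intros; apply Rabs_pos).
  pose proof (Rabs_pos (b k)). nra.
Qed.

Lemma pg_ev e : pg (ev r W b e).
Proof.
  induction e; simpl.
  - apply pg_const.
  - destruct (Compare_dec.lt_dec j r).
    + exists 1, 1%nat. split; [lra|]. intros z. pose proof (coord_le r z j l). simpl. lra.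
    + apply pg_const.
  - now apply pg_add.
  - now apply pg_mul.
  - exists (vsum r (fun j => Rabs (W k j)) + Rabs (b k) + 1), 1%nat.
    assert (0 <= vsum r (fun j => Rabs (W k j))) by (apply vsum_nonneg; intros; apply Rabs_pos).
    pose proof (Rabs_pos (b k)). split; [lra|].
    intros z. pose proof (vnorm_nonneg r z). pose proof (lin_bound k z).
    pose proof (sp_pos (lin r W b k z)). pose proof (sp_le (lin r W b k z)).
    rewrite Rabs_right by lra. simpl. nra.
  - exists 1, 0%nat. split; [lra|]. intros z. pose proof (sg_bounds (lin r W b k z)).
    rewrite Rabs_right by lra. simpl. lra.
Qed.

Lemma C_inf_ev e : C_inf_poly r (ev r W b e).
Proof.
  exists (fun l => ev r W b (List.fold_right (fun i e => dv r W i e) e l)). split; [reflexivity|split].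
  - intros l i _. simpl. apply dv_partial.
  - intros l. apply pg_poly, pg_ev.
Qed.

End G.


Lemma one_minus_sg u : 1 - sigm u = / (1 + exp u).
Proof. unfold sigm. pose proof (exp_pos u). field. lra. Qed.

Lemma sp_le_exp u : softplus u <= exp u.
Proof. unfold softplus. pose proof (exp_pos u). apply ln_le_of; [lra|]. apply exp_ineq1_le. Qed.

Lemma sp_one_minus_sg u : softplus u * (1 - sigm u) <= 1.
Proof.
  rewrite one_minus_sg. pose proof (exp_pos u). pose proof (sp_pos u).
  assert (Hi : 0 < / (1 + exp u)) by (apply Rinv_0_lt_compat; lra).
  destruct (Rle_or_lt u 0).
  - pose proof (sp_le_exp u). assert (exp u <= 1) by (rewrite <- exp_0; now apply exp_le_mono).
    assert (/ (1 + exp u) <= 1) by (rewrite <- Rinv_1; apply Rinv_le_contravar; lra). nra.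
  - pose proof (sp_le u). rewrite Rabs_right in H2 by lra. pose proof (exp_ineq1_le u).
    apply Rmult_le_reg_r with (1 + exp u); [lra|]. rewrite Rmult_assoc, Rinv_l by lra. nra.
Qed.

Lemma hess_scalar u x : Rabs (x - softplus u) * (sigm u * (1 - sigm u)) <= Rabs x + 1.
Proof.
  pose proof (sg_bounds u). pose proof (sp_one_minus_sg u). pose proof (sp_pos u).
  assert (Rabs (x - softplus u) <= Rabs x + softplus u).
  { unfold Rminus. eapply Rle_trans; [apply Rabs_triang|]. rewrite Rabs_Ropp, (Rabs_right (softplus u)); lra. }
  pose proof (Rabs_pos x). pose proof (Rabs_pos (x - softplus u)).
  assert (0 <= sigm u * (1 - sigm u) <= 1) by (split; nra).
  nra.
Qed.

Lemma exp_u_sq u : 0 <= u -> u * u <= 4 * exp u.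
Proof.
  intros Hu. replace u with (u/2 + u/2) at 3 by field. rewrite exp_plus.
  pose proof (exp_ineq1_le (u/2)). nra.
Qed.

Lemma a2_scalar u x b :
  (softplus u - x) * sigm u * (u - b) >= / 2 * (softplus u - x) ^ 2 - (8 + 3 * (1 + Rabs x + Rabs b) ^ 2).
Proof.
  set (A := 1 + Rabs x + Rabs b).
  pose proof (Rabs_pos x). pose proof (Rabs_pos b).
  pose proof (Rle_abs x). pose proof (Rle_abs b).
  pose proof (Rle_abs (-x)). pose proof (Rle_abs (-b)). rewrite Rabs_Ropp in *.
  pose proof (sg_bounds u) as Hg. pose proof (sp_pos u) as Hs. pose proof (exp_pos u) as He.
  destruct (Rle_or_lt u 0) as [Hu|Hu].
  - pose proof (sp_le_exp u). assert (exp u <= 1) by (rewrite <- exp_0; now apply exp_le_mono).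
    assert (Hgu : sigm u * (- u) <= 1).
    { assert (sigm u <= exp u).
      { unfold sigm. apply Rmult_le_reg_r with (1 + exp u); [lra|].
        unfold Rdiv. rewrite Rmult_assoc, Rinv_l by lra. nra. }
      pose proof (exp_ineq1_le (- u)) as Hx. rewrite exp_Ropp in Hx.
      assert (exp u * (- u) <= 1).
      { apply Rmult_le_reg_r with (/ exp u). apply Rinv_0_lt_compat; lra.
        rewrite Rmult_1_l. replace (exp u * - u * / exp u) with (- u) by (field; lra). lra. }
      nra. }
    assert (P1 : Rabs ((softplus u - x) * sigm u * (u - b)) <= (1 + Rabs x) * (1 + Rabs b)).
    { rewrite !Rabs_mult. assert (Rabs (softplus u - x) <= 1 + Rabs x).
      { unfold Rminus. eapply Rle_trans; [apply Rabs_triang|]. rewrite Rabs_Ropp, Rabs_right; lra. }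
      assert (Rabs (sigm u) * Rabs (u - b) <= 1 + Rabs b).
      { rewrite Rabs_right by lra. unfold Rminus. eapply Rle_trans.
        apply Rmult_le_compat_l; [lra|apply Rabs_triang]. rewrite Rabs_Ropp, Rabs_left1 by lra. nra. }
      pose proof (Rabs_pos (softplus u - x)). pose proof (Rabs_pos (sigm u)). pose proof (Rabs_pos (u - b)). nra. }
    pose proof (Rabs_pos ((softplus u - x) * sigm u * (u - b))).
    pose proof (Rle_abs (- ((softplus u - x) * sigm u * (u - b)))) as Hn. rewrite Rabs_Ropp in Hn.
    assert ((softplus u - x) ^ 2 <= (1 + Rabs x) ^ 2).
    { assert (Rabs (softplus u - x) <= 1 + Rabs x).
      { unfold Rminus. eapply Rle_trans; [apply Rabs_triang|]. rewrite Rabs_Ropp, Rabs_right; lra. }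
      rewrite <- (pow2_abs (softplus u - x)). apply pow_incr. split; [apply Rabs_pos|lra]. }
    unfold A. nra.
  - set (eps := 1 - sigm u). set (s := softplus u). set (g := sigm u).
    assert (Heps : eps * (u * u) <= 4).
    { unfold eps. rewrite one_minus_sg. pose proof (exp_u_sq u ltac:(lra)).
      apply Rmult_le_reg_r with (1 + exp u); [lra|].
      replace (/ (1 + exp u) * (u * u) * (1 + exp u)) with (u * u) by (field; lra). lra. }
    assert (Hd : u <= s <= u + 1).
    { split; [apply sp_ge|]. pose proof (sp_le u). rewrite Rabs_right in H5 by lra. unfold s; lra. }
    assert (E1 : (s - x) * (u - b) >= / 2 * (s - x) ^ 2 - / 2 * A ^ 2).
    { set (d := s - u).
      assert (Hq : (x - d - b) ^ 2 <= A ^ 2).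
      { rewrite <- (pow2_abs (x - d - b)). apply pow_incr. split; [apply Rabs_pos|].
        unfold A. unfold Rminus. eapply Rle_trans; [apply Rabs_triang|].
        eapply Rle_trans; [apply Rplus_le_compat_r; apply Rabs_triang|].
        rewrite !Rabs_Ropp. rewrite (Rabs_right d) by (unfold d; lra). unfold d; lra. }
      replace ((s - x) * (u - b)) with ((s - x) ^ 2 + (s - x) * (x - d - b)) by (unfold d; ring).
      pose proof (pow2_ge_0 ((s - x) + (x - d - b))) as Hsq. nra. }
    assert (E2 : Rabs (eps * (s - x) * (u - b)) <= 8 + 2 * A ^ 2).
    { assert (Ha : Rabs (s - x) <= u + A).
      { unfold Rminus. eapply Rle_trans; [apply Rabs_triang|]. rewrite Rabs_Ropp, Rabs_right by (unfold s; lra). unfold A; lra. }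
      assert (Hb : Rabs (u - b) <= u + A).
      { unfold Rminus. eapply Rle_trans; [apply Rabs_triang|]. rewrite Rabs_Ropp, Rabs_right by lra. unfold A; lra. }
      assert (0 < eps < 1) by (unfold eps, g in *; lra).
      rewrite !Rabs_mult, (Rabs_right eps) by lra.
      pose proof (Rabs_pos (s - x)). pose proof (Rabs_pos (u - b)).
      assert (Rabs (s - x) * Rabs (u - b) <= (u + A) * (u + A)).
      { apply Rmult_le_compat; auto. }
      assert ((u + A) * (u + A) <= 2 * (u * u) + 2 * A ^ 2) by (pose proof (pow2_ge_0 (u - A)); nra).
      assert (0 <= A) by (unfold A; lra).
      nra. }
    pose proof (Rle_abs (- (eps * (s - x) * (u - b)))) as Hn. rewrite Rabs_Ropp in Hn.
    replace ((s - x) * g * (u - b)) with ((s - x) * (u - b) - eps * (s - x) * (u - b)) by (unfold eps, g; ring).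
    pose proof (pow2_ge_0 A) as HA2. pose proof (Rle_abs (eps * (s - x) * (u - b))). lra.
Qed.


Fixpoint esum (n : nat) (f : nat -> expr) : expr :=
  match n with O => EC 0 | S n' => EA (esum n' f) (f n') end.

Lemma vsum_delta n (g : nat -> R) i : (i < n)%nat ->
  vsum n (fun j => g j * (if Nat.eq_dec j i then 1 else 0)) = g i.
Proof.
  induction n; simpl; intros H; [lia|].
  destruct (Nat.eq_dec n i).
  - subst i. rewrite (vsum_ext _ _ (fun _ => 0)).
    + assert (Z : forall q, vsum q (fun _ => 0) = 0) by (induction q; simpl; [ring|rewrite IHq; ring]).
      rewrite Z. ring.
    + intros j Hj. destruct (Nat.eq_dec j n); [lia|ring].
  - rewrite IHn by lia. ring.
Qed.

Lemma vsum_swap n p (f : nat -> nat -> R) :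
  vsum n (fun i => vsum p (fun k => f k i)) = vsum p (fun k => vsum n (fun i => f k i)).
Proof.
  induction n; simpl.
  - clear. induction p; simpl; [ring|rewrite <- IHp; ring].
  - rewrite IHn, <- vsum_plus. reflexivity.
Qed.

Section M.
Variable r m : nat.
Variable W : nat -> nat -> R.
Variable b : vec.
Variable sigma2 : R.
Variable x : vec.
Variable px : R.

Lemma ev_esum n f z : ev r W b (esum n f) z = vsum n (fun k => ev r W b (f k) z).
Proof. induction n; simpl; [reflexivity|rewrite IHn; reflexivity]. Qed.

Lemma ev_dv_esum i n f z : ev r W b (dv r W i (esum n f)) z = vsum n (fun k => ev r W b (dv r W i (f k)) z).
Proof. induction n; simpl; [reflexivity|rewrite IHn; reflexivity]. Qed.

Lemma ev_dv2_esum i j n f z : ev r W b (dv r W j (dv r W i (esum n f))) z =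
  vsum n (fun k => ev r W b (dv r W j (dv r W i (f k))) z).
Proof. induction n; simpl; [reflexivity|rewrite IHn; reflexivity]. Qed.

Definition C0 := - ((- INR m / 2) * ln (2 * PI * sigma2) + (- INR r / 2) * ln (2 * PI * 1) - ln px).
Definition cc1 := / (2 * sigma2).
Definition dk k := EA (EC (x k)) (EM (EC (-1)) (ESp k)).
Definition eV := EA (EC C0) (EA (EM (EC cc1) (esum m (fun k => EM (dk k) (dk k))))
                              (EM (EC (/ 2)) (esum r (fun j => EM (EV j) (EV j))))).

Lemma V_eq : 0 < sigma2 -> 0 < px -> Vpot r m W b sigma2 px x = ev r W b eV.
Proof.
  intros Hs Hp. apply functional_extensionality. intro z.
  pose proof PI_RGT_0.
  assert (E1 : ev r W b eV z = C0 + (/ (2 * sigma2) * vsum m (fun i => (x i - hmap r W b z i) ^ 2) +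
     / 2 * vsum r (fun j => (z j - 0) ^ 2))).
  { simpl ev. rewrite !ev_esum. simpl ev.
    rewrite (vsum_ext r (fun k => (if Compare_dec.lt_dec k r then z k else 0) * (if Compare_dec.lt_dec k r then z k else 0)) (fun j => (z j - 0) ^ 2)).
    2:{ intros j Hj. destruct (Compare_dec.lt_dec j r); [ring|lia]. }
    rewrite (vsum_ext m (fun k => (x k + -1 * softplus (lin r W b k z)) * (x k + -1 * softplus (lin r W b k z)))
      (fun i => (x i - hmap r W b z i) ^ 2)).
    2:{ intros; unfold hmap, lin; ring. }
    unfold cc1. ring. }
  rewrite E1. unfold Vpot, posterior, gauss_density, Rdiv, Rpower, C0.
  assert (P1 : 0 < 2 * PI * sigma2) by (apply Rmult_lt_0_compat; lra).
  assert (P2 : 0 < 2 * PI * 1) by lra.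
  rewrite !ln_mult, ln_Rinv, !ln_exp; try assumption; try apply exp_pos;
    try (apply Rmult_lt_0_compat; apply exp_pos); try (apply Rinv_0_lt_compat; assumption).
  rewrite !vnorm_sq. field. lra. all: try lra. repeat apply Rmult_lt_0_compat; apply exp_pos.
Qed.

Lemma vsum_scal_l n f c : vsum n (fun j => c * f j) = c * vsum n f.
Proof. induction n; simpl; [ring|rewrite IHn; ring]. Qed.

Lemma coef_eq k i : (i < r)%nat -> coef r W k i = W k i.
Proof. intros H. unfold coef. now apply vsum_delta. Qed.

Notation sp k z := (softplus (lin r W b k z)).
Notation sg k z := (sigm (lin r W b k z)).

Lemma ev_eV z : ev r W b eV z = C0 + cc1 * vsum m (fun k => (x k - sp k z) ^ 2) + / 2 * vsum r (fun j => z j ^ 2).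
Proof.
  simpl ev. rewrite !ev_esum. simpl ev.
  rewrite (vsum_ext r (fun k => (if Compare_dec.lt_dec k r then z k else 0) * (if Compare_dec.lt_dec k r then z k else 0)) (fun j => z j ^ 2)).
  2:{ intros j Hj. destruct (Compare_dec.lt_dec j r); [ring|lia]. }
  rewrite (vsum_ext m (fun k => (x k + -1 * sp k z) * (x k + -1 * sp k z)) (fun k => (x k - sp k z) ^ 2)).
  2:{ intros; ring. }
  ring.
Qed.

Lemma grad_eq i z : (i < r)%nat ->
  ev r W b (dv r W i eV) z = cc1 * vsum m (fun k => -2 * (x k - sp k z) * (sg k z * coef r W k i)) + z i.
Proof.
  intros Hi. simpl ev. rewrite !ev_dv_esum. simpl ev.
  rewrite (vsum_ext r _ (fun j => (2 * z j) * (if Nat.eq_dec j i then 1 else 0))).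
  2:{ intros j Hj. destruct (Compare_dec.lt_dec j r); [|lia]. destruct (Nat.eq_dec j i); ring. }
  rewrite vsum_delta by exact Hi.
  rewrite (vsum_ext m _ (fun k => -2 * (x k - sp k z) * (sg k z * coef r W k i))).
  2:{ intros; ring. }
  field.
Qed.

Lemma hess_eq i j z : (i < r)%nat -> (j < r)%nat ->
  ev r W b (dv r W j (dv r W i eV)) z =
  cc1 * vsum m (fun k => 2 * (sg k z * coef r W k j) * (sg k z * coef r W k i)
     - 2 * (x k - sp k z) * (sg k z * (1 + -1 * sg k z) * coef r W k j * coef r W k i))
  + 2 * / 2 * (if Nat.eq_dec i j then 1 else 0).
Proof.
  intros Hi Hj. simpl ev. rewrite !ev_dv2_esum. simpl ev.
  rewrite (vsum_ext r _ (fun l => (2 * (if Nat.eq_dec l j then 1 else 0)) * (if Nat.eq_dec l i then 1 else 0))).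
  2:{ intros l Hl. destruct (Compare_dec.lt_dec l r); [|lia].
      destruct (Nat.eq_dec l i); destruct (Nat.eq_dec l j); ring. }
  rewrite vsum_delta by exact Hi.
  rewrite (vsum_ext m _ (fun k => 2 * (sg k z * coef r W k j) * (sg k z * coef r W k i)
     - 2 * (x k - sp k z) * (sg k z * (1 + -1 * sg k z) * coef r W k j * coef r W k i))).
  2:{ intros; ring. }
  destruct (Nat.eq_dec i j); destruct (Nat.eq_dec j i); try lia; ring.
Qed.

End M.


Lemma vsum_const n c : vsum n (fun _ => c) = INR n * c.
Proof. induction n; simpl vsum; [simpl; ring|rewrite IHn, S_INR; ring]. Qed.

Lemma vsum_S n f : vsum (S n) f = vsum n f + f n.
Proof. reflexivity. Qed.

Lemma vnorm_le_l1 k w : vnorm k w <= vsum k (fun i => Rabs (w i)).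
Proof.
  unfold vnorm. assert (H0 : 0 <= vsum k (fun i => Rabs (w i))) by (apply vsum_nonneg; intros; apply Rabs_pos).
  rewrite <- (sqrt_Rsqr (vsum k (fun i => Rabs (w i)))) by exact H0.
  apply sqrt_le_1_alt. unfold Rsqr.
  induction k; [simpl; lra|]. rewrite !vsum_S.
  assert (H1 : 0 <= vsum k (fun i => Rabs (w i))) by (apply vsum_nonneg; intros; apply Rabs_pos).
  specialize (IHk H1). pose proof (Rabs_pos (w k)).
  assert (w k ^ 2 = Rabs (w k) * Rabs (w k)) by (rewrite <- Rabs_mult, Rabs_right; [ring|nra]).
  nra.
Qed.

Lemma C_beta_bound beta : 0 < beta <= / 2 -> C_beta beta <= beta / 2.
Proof.
  intros H. unfold C_beta. apply Rmult_le_reg_r with (8 * (1 - beta)); [lra|].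
  unfold Rdiv. rewrite Rmult_assoc, Rinv_l by lra. nra.
Qed.

Theorem corollary1 (r m : nat) (hr : (1 <= r)%nat) (hm : (1 <= m)%nat)
  (W : nat -> nat -> R) (b : vec) (sigma2 : R) (hs : 0 < sigma2)
  (x : vec) (px : R) (hpx : 0 < px) :
  let V := Vpot r m W b sigma2 px x in
  (exists L : R, forall z, L <= V z) /\
  A1b r V /\ A1c r V /\
  (forall gamma, 0 < gamma -> A2 r gamma V).
Proof.
  intros V. subst V. rewrite (V_eq r m W b sigma2 x px hs hpx).
  set (E := eV r m sigma2 x px).
  assert (Hc1 : 0 < cc1 sigma2) by (unfold cc1; apply Rinv_0_lt_compat; lra).
  assert (HS2 : forall z, 0 <= vsum m (fun k => (x k - softplus (lin r W b k z)) ^ 2))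
    by (intros; apply vsum_nonneg; intros; apply pow2_ge_0).
  assert (HSz : forall z, 0 <= vsum r (fun j => z j ^ 2))
    by (intros; apply vsum_nonneg; intros; apply pow2_ge_0).
  split; [|split; [|split]].
  -
    exists (C0 r m sigma2 px). intro z. unfold E. rewrite ev_eV.
    pose proof (HS2 z). pose proof (HSz z). nra.
  -
    set (Ck := fun k => vsum r (fun i => Rabs (coef r W k i))).
    set (M := 1 + cc1 sigma2 * vsum m (fun k => 2 * Ck k ^ 2 * (Rabs (x k) + 2))).
    assert (HCk : forall k i, (i < r)%nat -> Rabs (coef r W k i) <= Ck k).
    { intros k i Hi. unfold Ck. apply (vsum_term r (fun i => Rabs (coef r W k i)) i); auto.
      intros; apply Rabs_pos. }
    assert (HM : forall i j z, (i < r)%nat -> (j < r)%nat ->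
              Rabs (ev r W b (dv r W j (dv r W i E)) z) <= M).
    { intros i j z Hi Hj. unfold E. rewrite hess_eq by auto.
      eapply Rle_trans; [apply Rabs_triang|].
      rewrite Rabs_mult, (Rabs_right (cc1 sigma2)) by lra.
      assert (Rabs (2 * / 2 * (if Nat.eq_dec i j then 1 else 0)) <= 1).
      { destruct (Nat.eq_dec i j); rewrite Rabs_right; lra. }
      unfold M. apply Rplus_le_compat_r with (r := 1) in H. 
      assert (Hs : Rabs (vsum m (fun k => 2 * (sigm (lin r W b k z) * coef r W k j) * (sigm (lin r W b k z) * coef r W k i) -
         2 * (x k - softplus (lin r W b k z)) * (sigm (lin r W b k z) * (1 + -1 * sigm (lin r W b k z)) * coef r W k j * coef r W k i)))
         <= vsum m (fun k => 2 * Ck k ^ 2 * (Rabs (x k) + 2))).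
      { eapply Rle_trans; [apply vsum_abs|]. apply vsum_le. intros k Hk.
        set (g := sigm (lin r W b k z)). set (s := softplus (lin r W b k z)).
        set (ci := coef r W k i). set (cj := coef r W k j).
        pose proof (HCk k i Hi) as Hci. pose proof (HCk k j Hj) as Hcj. fold ci in Hci. fold cj in Hcj.
        pose proof (sg_bounds (lin r W b k z)) as Hg. fold g in Hg.
        pose proof (hess_scalar (lin r W b k z) (x k)) as Hh. fold g s in Hh.
        replace (2 * (g * cj) * (g * ci) - 2 * (x k - s) * (g * (1 + -1 * g) * cj * ci))
          with (2 * (cj * ci) * (g * g - (x k - s) * (g * (1 - g)))) by ring.
        rewrite !Rabs_mult, (Rabs_right 2) by lra.
        assert (Rabs (g * g - (x k - s) * (g * (1 - g))) <= Rabs (x k) + 2).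
        { unfold Rminus at 1. eapply Rle_trans; [apply Rabs_triang|].
          rewrite Rabs_Ropp, (Rabs_mult (x k - s)), (Rabs_right (g * (1 - g))) by nra.
          rewrite (Rabs_right (g * g)) by nra. nra. }
        pose proof (Rabs_pos ci). pose proof (Rabs_pos cj).
        pose proof (Rabs_pos (g * g - (x k - s) * (g * (1 - g)))).
        assert (Rabs cj * Rabs ci <= Ck k ^ 2) by (simpl; rewrite Rmult_1_r; apply Rmult_le_compat; lra).
        assert (0 <= Rabs cj * Rabs ci) by nra.
        assert (0 <= Rabs (x k)) by apply Rabs_pos.
        apply Rmult_le_compat_l with (r := 2) in H3; [|lra].
        nra. }
      apply Rmult_le_compat_l with (r := cc1 sigma2) in Hs; [|lra]. lra. }
    assert (HM0 : 0 <= M).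
    { unfold M. assert (0 <= vsum m (fun k => 2 * Ck k ^ 2 * (Rabs (x k) + 2))).
      { apply vsum_nonneg. intros k _. pose proof (Rabs_pos (x k)). pose proof (pow2_ge_0 (Ck k)). nra. }
      nra. }
    exists (INR r * INR r * M + 1), (fun i => ev r W b (dv r W i E)),
      (fun i j => ev r W b (dv r W j (dv r W i E))).
    split; [pose proof (pos_INR r); nra|split; [|split]].
    + intros i _. apply dv_partial.
    + intros i j _ _. apply dv_partial.
    + intros z v. pose proof (vnorm_nonneg r v) as Hv.
      eapply Rle_trans; [apply vnorm_le_l1|].
      eapply Rle_trans.
      { apply (vsum_le r _ (fun _ => INR r * (M * vnorm r v))). intros i Hi.
        eapply Rle_trans; [apply vsum_abs|]. rewrite <- vsum_const. apply vsum_le.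
        intros j Hj. rewrite Rabs_mult. apply Rmult_le_compat; try apply Rabs_pos.
        - now apply HM.
        - now apply coord_le. }
      rewrite vsum_const. pose proof (pos_INR r). nra.
  -
    apply C_inf_ev.
  -
    intros gamma Hgam.
    set (beta := / (2 * (1 + gamma ^ 2))).
    pose proof (pow2_ge_0 gamma) as Hg2.
    assert (Hb : 0 < beta <= / 2).
    { unfold beta. split; [apply Rinv_0_lt_compat; lra|]. apply Rinv_le_contravar; lra. }
    assert (HCB : gamma ^ 2 * C_beta beta <= / 4).
    { pose proof (C_beta_bound beta Hb).
      assert (gamma ^ 2 * beta <= / 2).
      { unfold beta. apply Rmult_le_reg_r with (2 * (1 + gamma ^ 2)); [lra|].
        rewrite Rmult_assoc, Rinv_l by lra. lra. }
      assert (0 <= C_beta beta).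
      { unfold C_beta. apply Rmult_le_pos; [nra|]. left. apply Rinv_0_lt_compat. nra. }
      nra. }
    set (K := fun k => 8 + 3 * (1 + Rabs (x k) + Rabs (b k)) ^ 2).
    set (KS := vsum m K).
    assert (HKS : 0 <= KS).
    { apply vsum_nonneg. intros. unfold K. pose proof (pow2_ge_0 (1 + Rabs (x j) + Rabs (b j))). lra. }
    exists (cc1 sigma2 * KS + Rabs (beta * C0 r m sigma2 px) + 1), beta, (fun i => ev r W b (dv r W i E)).
    split; [pose proof (Rabs_pos (beta * C0 r m sigma2 px)); nra|].
    split; [lra|]. split; [intros i _; apply dv_partial|].
    intro z.
    set (s := fun k => softplus (lin r W b k z)). set (g := fun k => sigm (lin r W b k z)).
    assert (HS : vsum r (fun i => ev r W b (dv r W i E) z * z i) =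
       cc1 sigma2 * (2 * vsum m (fun k => (s k - x k) * g k * (lin r W b k z - b k))) + vsum r (fun i => z i ^ 2)).
    { rewrite (vsum_ext r _ (fun i => cc1 sigma2 * vsum m (fun k => (2 * ((s k - x k) * g k)) * (coef r W k i * z i)) + z i ^ 2)).
      2:{ intros i Hi. unfold E. rewrite grad_eq by auto.
          rewrite Rmult_plus_distr_r, Rmult_assoc, <- vsum_scal. f_equal; [|ring]. f_equal.
          apply vsum_ext. intros; unfold s, g; ring. }
      rewrite vsum_plus, vsum_scal_l, vsum_swap. f_equal. f_equal.
      rewrite <- vsum_scal_l. apply vsum_ext. intros k Hk.
      rewrite (vsum_scal_l r (fun i => coef r W k i * z i)).
      rewrite (vsum_ext r (fun i => coef r W k i * z i) (fun i => W k i * z i)).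
      2:{ intros i Hi. rewrite coef_eq by auto. reflexivity. }
      unfold lin. ring. }
    rewrite HS. unfold E. rewrite ev_eV. rewrite vnorm_sq.
    fold (s). 
    set (S2 := vsum m (fun k => (x k - s k) ^ 2)).
    set (S1 := vsum m (fun k => (s k - x k) * g k * (lin r W b k z - b k))).
    set (Sz := vsum r (fun j => z j ^ 2)).
    assert (HS1 : S1 >= / 2 * S2 - KS).
    { unfold S1, S2, KS.
      assert (vsum m (fun k => / 2 * (x k - s k) ^ 2 + -1 * K k) <= vsum m (fun k => (s k - x k) * g k * (lin r W b k z - b k))).
      { apply vsum_le. intros k Hk. pose proof (a2_scalar (lin r W b k z) (x k) (b k)) as Ha.
        unfold K, s, g. replace ((x k - softplus (lin r W b k z)) ^ 2) with ((softplus (lin r W b k z) - x k) ^ 2) by ring.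
        lra. }
      rewrite vsum_plus, vsum_scal_l, (vsum_scal_l m K) in H. lra. }
    assert (H2 : 0 <= S2) by (unfold S2; apply vsum_nonneg; intros; apply pow2_ge_0).
    assert (Hz : 0 <= Sz) by (unfold Sz; apply vsum_nonneg; intros; apply pow2_ge_0).
    pose proof (Rle_abs (beta * C0 r m sigma2 px)).
    assert (cc1 sigma2 * S1 >= cc1 sigma2 * (/ 2 * S2 - KS)) by (apply Rle_ge, Rmult_le_compat_l; lra).
    assert (beta * (cc1 sigma2 * S2) <= / 2 * (cc1 sigma2 * S2)) by (apply Rmult_le_compat_r; [apply Rmult_le_pos; lra|lra]).
    assert (gamma ^ 2 * C_beta beta * Sz <= / 4 * Sz) by (apply Rmult_le_compat_r; lra).
    assert (beta * Sz <= / 2 * Sz) by (apply Rmult_le_compat_r; lra).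
    change (vsum m (fun k => (x k - softplus (lin r W b k z)) ^ 2)) with S2. lra.
Qed.
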